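(* (1) If $\varphi:(\mathbb R\times\mathbb R^n,(0,0))\to(\mathbb R^2\times\mathbb R^n,(0,0))$ is a map-germ of pedal unfolding type, then its integration $\mathcal I(\varphi)$ is a normalized Legendrian map-germ. (2) If $\Phi:(\mathbb R\times\mathbb R^n,(0,0))\to(\mathbb R^2\times\mathbb R^n,(0,0))$ is a normalized Legendrian map-germ, then its differential $\mathcal D(\Phi)$ is a map-germ of pedal unfolding type.
   Context: All maps are $C^\infty$. A map-germ $\Phi:(\mathbb R^m,0)\to(\mathbb R^{m+1},0)$ is Legendrian if there is a germ of unit vector field $\nu_\Phi$ along $\Phi$ with $\frac{\partial\Phi}{\partial x_j}\cdot\nu_\Phi=0$ for $j=1,\dots,m$ and such that $(\Phi,\nu_\Phi):(\mathbb R^m,0)\to T_1\mathbb R^{m+1}=\mathbb R^{m+1}\times S^m$ is non-singular (an immersion). A Legendrian germ $\Phi:(\mathbb R\times\mathbb R^n,(0,0))\to(\mathbb R^2\times\mathbb R^n,(0,0))$ is normalized if (i) $\Phi(x,y)=(\Phi_1(x,y),\Phi_2(x,y),y)$, $y=(y_1,\dots,y_n)$; (ii) $\frac{\partial\Phi_2}{\partial x}(0,0)=0$; (iii) $\nu_\Phi(0,0)=\pm\frac{\partial}{\partial X_1}$ for some choice of $\nu_\Phi$, where $(X_1,X_2,Y_1,\dots,Y_n)$ are standard coordinates on the target. A map-germ $\varphi$ is of pedal unfolding type if $\varphi(x,y)=(n(x,y)p(x,y),p(x,y),y)$ with function-germs $n,p:(\mathbb R\times\mathbb R^n,(0,0))\to(\mathbb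 R,0)$ and $\frac{\partial n}{\partial x}(0,0)\neq0$. The integration of such $\varphi$ is $\mathcal I(\varphi)(x,y)=\big(\int_0^x n(t,y)p(t,y)\,dt,\ \int_0^x p(t,y)\,dt,\ y\big)$. The differential of a normalized Legendrian $\Phi$ is $\mathcal D(\Phi)(x,y)=\big(\frac{\partial\Phi_1}{\partial x}(x,y),\frac{\partial\Phi_2}{\partial x}(x,y),y\big)$. *)

(* Defs.v *)
From Stdlib Require Import Reals Lra ClassicalEpsilon.
From Stdlib Require Vectors.Fin.
Open Scope R_scope.

Definition Dom (n : nat) : Type := (R * (Fin.t n -> R))%type.
Definition Tgt (n : nat) : Type := (R * R * (Fin.t n -> R))%type.

Definition origin {n : nat} : Dom n := (0, fun _ => 0).

Definition box {n : nat} (r : R) (q : Dom n) : Prop :=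
  Rabs (fst q) < r /\ forall i, Rabs (snd q i) < r.

(* Directions of partial derivatives: None = d/dx, Some i = d/dy_i. *)
Definition shift {n : nat} (q : Dom n) (d : option (Fin.t n)) (h : R) : Dom n :=
  match d with
  | None => (fst q + h, snd q)
  | Some i => (fst q, fun j => if Fin.eq_dec i j then snd q j + h else snd q j)
  end.

Definition has_pd {n : nat} (f : Dom n -> R) (d : option (Fin.t n)) (q : Dom n) (l : R) : Prop :=
  derivable_pt_lim (fun h => f (shift q d h)) 0 l.

(* The partial derivative as a total function (0 where it does not exist). *)
Definition pd {n : nat} (f : Dom n -> R) (d : option (Fin.t n)) (q : Dom n) : R :=
  match excluded_middle_informative (exists l, has_pd f d q l) with
  | left H => proj1_sig (constructive_indefinite_description _ H)
  | right _ => 0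
  end.

Definition cont_on {n : nat} (U : Dom n -> Prop) (f : Dom n -> R) : Prop :=
  forall q, U q -> forall eps, 0 < eps -> exists delta, 0 < delta /\
    forall q', Rabs (fst q' - fst q) < delta ->
               (forall i, Rabs (snd q' i - snd q i) < delta) ->
               Rabs (f q' - f q) < eps.

Fixpoint Ck {n : nat} (k : nat) (U : Dom n -> Prop) (f : Dom n -> R) : Prop :=
  match k with
  | O => cont_on U f
  | S k' => cont_on U f /\
      forall d, (forall q, U q -> exists l, has_pd f d q l) /\ Ck k' U (pd f d)
  end.

Definition smooth_germ {n : nat} (f : Dom n -> R) : Prop :=
  exists r, 0 < r /\ forall k, Ck k (box r) f.

Definition c1 {n : nat} (F : Dom n -> Tgt n) (q : Dom n) : R := fst (fst (F q)).
Definition c2 {n : nat} (F : Dom n -> Tgt n) (q : Dom n) : R := snd (fst (F q)).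
Definition cy {n : nat} (F : Dom n -> Tgt n) (i : Fin.t n) (q : Dom n) : R := snd (F q) i.

Definition smooth_map_germ {n : nat} (F : Dom n -> Tgt n) : Prop :=
  smooth_germ (c1 F) /\ smooth_germ (c2 F) /\ forall i, smooth_germ (cy F i).

Fixpoint sumFin (n : nat) : (Fin.t n -> R) -> R :=
  match n with
  | O => fun _ => 0
  | S m => fun f => f Fin.F1 + sumFin m (fun i => f (Fin.FS i))
  end.

Definition dotT {n : nat} (u v : Tgt n) : R :=
  fst (fst u) * fst (fst v) + snd (fst u) * snd (fst v)
  + sumFin n (fun i => snd u i * snd v i).

Definition pdT {n : nat} (F : Dom n -> Tgt n) (d : option (Fin.t n)) (q : Dom n) : Tgt n :=
  (pd (c1 F) d q, pd (c2 F) d q, fun i => pd (cy F i) d q).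

Definition lin {n : nat} (c : option (Fin.t n) -> R) (w : option (Fin.t n) -> R) : R :=
  c None * w None + sumFin n (fun i => c (Some i) * w (Some i)).

Definition dR0 {n : nat} (f : Dom n -> R) (c : option (Fin.t n) -> R) : R :=
  lin c (fun d => pd f d origin).

Definition immersive_pair_at0 {n : nat} (F nu : Dom n -> Tgt n) : Prop :=
  forall c : option (Fin.t n) -> R,
    dR0 (c1 F) c = 0 -> dR0 (c2 F) c = 0 -> (forall i, dR0 (cy F i) c = 0) ->
    dR0 (c1 nu) c = 0 -> dR0 (c2 nu) c = 0 -> (forall i, dR0 (cy nu i) c = 0) ->
    forall d, c d = 0.

Definition legendrian_field {n : nat} (F nu : Dom n -> Tgt n) : Prop :=
  smooth_map_germ nu /\
  (exists r, 0 < r /\ forall q, box r q ->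
      dotT (nu q) (nu q) = 1 /\ forall d, dotT (pdT F d q) (nu q) = 0) /\
  immersive_pair_at0 F nu.

Definition tgt0 {n : nat} : Tgt n := (0, 0, fun _ => 0).

Definition legendrian {n : nat} (F : Dom n -> Tgt n) : Prop :=
  smooth_map_germ F /\ F origin = tgt0 /\ exists nu, legendrian_field F nu.

Definition e1 {n : nat} : Tgt n := (1, 0, fun _ => 0).
Definition me1 {n : nat} : Tgt n := (-1, 0, fun _ => 0).

Definition normalized_legendrian {n : nat} (F : Dom n -> Tgt n) : Prop :=
  legendrian F /\
  (exists r, 0 < r /\ forall q, box r q -> snd (F q) = snd q) /\
  pd (c2 F) None origin = 0 /\
  (exists nu, legendrian_field F nu /\ (nu origin = e1 \/ nu origin = me1)).

Definition pedal_data {n : nat} (nf pf : Dom n -> R) : Prop :=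
  smooth_germ nf /\ smooth_germ pf /\ nf origin = 0 /\ pf origin = 0 /\
  pd nf None origin <> 0.

Definition pedal_map {n : nat} (nf pf : Dom n -> R) (q : Dom n) : Tgt n :=
  (nf q * pf q, pf q, snd q).

Definition germ_eq {n : nat} (F G : Dom n -> Tgt n) : Prop :=
  exists r, 0 < r /\ forall q, box r q -> F q = G q.

Definition pedal_unfolding_type {n : nat} (phi : Dom n -> Tgt n) : Prop :=
  exists nf pf, pedal_data nf pf /\ germ_eq phi (pedal_map nf pf).

(* Oriented Riemann integral int_a^b f (0 if f is not Riemann integrable). *)
Definition Rint (f : R -> R) (a b : R) : R :=
  match excluded_middle_informative (exists pr : Riemann_integrable f a b, True) with
  | left H => RiemannInt (proj1_sig (constructive_indefinite_description _ H))
  | right _ => 0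
  end.

Definition integration {n : nat} (nf pf : Dom n -> R) (q : Dom n) : Tgt n :=
  (Rint (fun t => nf (t, snd q) * pf (t, snd q)) 0 (fst q),
   Rint (fun t => pf (t, snd q)) 0 (fst q),
   snd q).

Definition differential {n : nat} (F : Dom n -> Tgt n) (q : Dom n) : Tgt n :=
  (pd (c1 F) None q, pd (c2 F) None q, snd q).

(* Main.v *)
From Pilot Require Import Defs.
From Stdlib Require Import Reals Lra Lia ClassicalEpsilon FunctionalExtensionality Classical.
From Stdlib Require Vectors.Fin.
From Coquelicot Require Import Coquelicot.
Import Pilot.Defs.
Open Scope R_scope.

Lemma locR (x : R) (P : R -> Prop) :
  (exists e, 0 < e /\ forall y, Rabs (y - x) < e -> P y) -> locally x P.
Proof.
  intros [e [He H]]. exists (mkposreal e He). intros y Hy. apply H. exact Hy.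
Qed.

Lemma locR_inv (x : R) (P : R -> Prop) :
  locally x P -> exists e, 0 < e /\ forall y, Rabs (y - x) < e -> P y.
Proof.
  intros [e H]. exists e. split. apply cond_pos. intros y Hy. apply H. exact Hy.
Qed.

Lemma fin_bound n (y : Fin.t n -> R) r :
  (forall i, Rabs (y i) < r) -> exists m, m < r /\ forall i, Rabs (y i) <= m.
Proof.
  induction n as [|n IH].
  - intros _. exists (r - 1). split. lra. intros i. inversion i.
  - intros H. destruct (IH (fun i => y (Fin.FS i))) as [m [Hm Hi]].
    { intros i; apply H. }
    exists (Rmax m (Rabs (y Fin.F1))). split.
    + apply Rmax_lub_lt; auto.
    + intros i. apply (Fin.caseS' i (fun i => Rabs (y i) <= Rmax m (Rabs (y Fin.F1)))).
      * apply Rmax_r.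
      * intros p. eapply Rle_trans. apply Hi. apply Rmax_l.
Qed.

Lemma box_margin {n} r (q : Dom n) : box r q ->
  exists m, 0 < m /\ forall q', Rabs (fst q' - fst q) < m ->
     (forall i, Rabs (snd q' i - snd q i) < m) -> box r q'.
Proof.
  intros [H1 H2]. destruct (fin_bound n (snd q) r H2) as [m [Hm Hi]].
  exists (Rmin (r - m) (r - Rabs (fst q))). split.
  - apply Rmin_pos; lra.
  - intros q' Hx Hy. split.
    + assert (Rabs (fst q') <= Rabs (fst q'  - fst q) + Rabs (fst q)).
      { replace (fst q') with ((fst q' - fst q) + fst q) at 1 by ring. apply Rabs_triang. }
      pose proof (Rmin_r (r - m) (r - Rabs (fst q))). lra.
    + intros i. specialize (Hy i). specialize (Hi i).
      assert (Rabs (snd q' i) <= Rabs (snd q' i - snd q i) + Rabs (snd q i)).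
      { replace (snd q' i) with ((snd q' i - snd q i) + snd q i) at 1 by ring. apply Rabs_triang. }
      pose proof (Rmin_l (r - m) (r - Rabs (fst q))). lra.
Qed.

Lemma shift_close {n} (q : Dom n) d h :
  Rabs (fst (shift q d h) - fst q) <= Rabs h /\
  forall i, Rabs (snd (shift q d h) i - snd q i) <= Rabs h.
Proof.
  destruct d as [j|]; simpl; split.
  - rewrite Rminus_diag, Rabs_R0. apply Rabs_pos.
  - intros i. destruct (Fin.eq_dec j i).
    + replace (snd q i + h - snd q i) with h by ring. lra.
    + rewrite Rminus_diag, Rabs_R0. apply Rabs_pos.
  - replace (fst q + h - fst q) with h by ring. lra.
  - intros i. rewrite Rminus_diag, Rabs_R0. apply Rabs_pos.
Qed.

Lemma box_shift {n} r (q : Dom n) d : box r q ->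
  exists e, 0 < e /\ forall h, Rabs h < e -> box r (shift q d h).
Proof.
  intros Hq. destruct (box_margin r q Hq) as [m [Hm H]].
  exists m. split; auto. intros h Hh. destruct (shift_close q d h) as [A B].
  apply H. lra. intros i; specialize (B i); lra.
Qed.

Lemma has_pd_pd {n} (f : Dom n -> R) d q l : has_pd f d q l -> pd f d q = l.
Proof.
  intros H. unfold pd. destruct excluded_middle_informative as [E|E].
  - destruct constructive_indefinite_description as [l' Hl']. simpl.
    eapply uniqueness_limite; eauto.
  - exfalso. apply E. eauto.
Qed.

Lemma has_pd_ext {n} r (f g : Dom n -> R) d q l :
  box r q -> (forall q', box r q' -> f q' = g q') -> has_pd f d q l -> has_pd g d q l.
Proof.
  intros Hq Hfg H. unfold has_pd in *. apply is_derive_Reals. apply is_derive_Reals in H.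
  eapply is_derive_ext_loc; [|exact H]. apply locR.
  destruct (box_shift r q d Hq) as [e [He He']]. exists e. split; auto.
  intros y Hy. apply Hfg. apply He'. rewrite Rminus_0_r in Hy. exact Hy.
Qed.

Lemma pd_ext {n} r (f g : Dom n -> R) d q :
  box r q -> (forall q', box r q' -> f q' = g q') -> pd f d q = pd g d q.
Proof.
  intros Hq Hfg. destruct (classic (exists l, has_pd f d q l)) as [[l Hl]|N].
  - rewrite (has_pd_pd _ _ _ _ Hl). rewrite (has_pd_pd g d q l); auto.
    eapply has_pd_ext; eauto.
  - unfold pd. destruct excluded_middle_informative as [E|E]. contradiction.
    destruct excluded_middle_informative as [E'|E']; auto.
    exfalso. apply N. destruct E' as [l Hl]. exists l.
    apply (has_pd_ext r g f d q l Hq); [intros; symmetry; auto | exact Hl].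
Qed.

Definition contat {n} (f : Dom n -> R) (q : Dom n) : Prop :=
  forall eps, 0 < eps -> exists delta, 0 < delta /\
    forall q', Rabs (fst q' - fst q) < delta ->
               (forall i, Rabs (snd q' i - snd q i) < delta) ->
               Rabs (f q' - f q) < eps.

Lemma cont_on_at {n} U (f : Dom n -> R) : cont_on U f <-> forall q, U q -> contat f q.
Proof. unfold cont_on, contat. tauto. Qed.

Lemma contat_ext {n} r (f g : Dom n -> R) q : box r q -> (forall q', box r q' -> f q' = g q') ->
  contat f q -> contat g q.
Proof.
  intros Hq Hfg H eps He. destruct (H eps He) as [d [Hd Hd']].
  destruct (box_margin r q Hq) as [m [Hm Hm']].
  exists (Rmin d m). split. apply Rmin_pos; auto.
  intros q' H1 H2. rewrite <- !Hfg; auto.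
  - apply Hd'. pose proof (Rmin_l d m); lra. intros i; specialize (H2 i); pose proof (Rmin_l d m); lra.
  - apply Hm'. pose proof (Rmin_r d m); lra. intros i; specialize (H2 i); pose proof (Rmin_r d m); lra.
Qed.

Lemma contat_const {n} c (q : Dom n) : contat (fun _ => c) q.
Proof. intros eps He. exists 1. split. lra. intros. rewrite Rminus_diag, Rabs_R0. auto. Qed.

Lemma contat_fst {n} (q : Dom n) : contat fst q.
Proof. intros eps He. exists eps. split. auto. intros. auto. Qed.

Lemma contat_snd {n} j (q : Dom n) : contat (fun q => snd q j) q.
Proof. intros eps He. exists eps. split. auto. intros. auto. Qed.

Lemma contat_binop {n} (op : R -> R -> R) (f g : Dom n -> R) q :
  (forall eps, 0 < eps -> exists delta, 0 < delta /\ forall a b,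
     Rabs (a - f q) < delta -> Rabs (b - g q) < delta -> Rabs (op a b - op (f q) (g q)) < eps) ->
  contat f q -> contat g q -> contat (fun q => op (f q) (g q)) q.
Proof.
  intros Hop Hf Hg eps He. destruct (Hop eps He) as [d [Hd Hd']].
  destruct (Hf d Hd) as [d1 [Hd1 H1]]. destruct (Hg d Hd) as [d2 [Hd2 H2]].
  exists (Rmin d1 d2). split. apply Rmin_pos; auto.
  intros q' A B. apply Hd'.
  - apply H1. pose proof (Rmin_l d1 d2); lra. intros i; specialize (B i); pose proof (Rmin_l d1 d2); lra.
  - apply H2. pose proof (Rmin_r d1 d2); lra. intros i; specialize (B i); pose proof (Rmin_r d1 d2); lra.
Qed.

Lemma contat_plus {n} (f g : Dom n -> R) q : contat f q -> contat g q -> contat (fun q => f q + g q) q.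
Proof.
  apply contat_binop. intros eps He. exists (eps/2). split. lra. intros a b A B.
  replace (a + b - (f q + g q)) with ((a - f q) + (b - g q)) by ring.
  eapply Rle_lt_trans. apply Rabs_triang. lra.
Qed.

Lemma contat_mult {n} (f g : Dom n -> R) q : contat f q -> contat g q -> contat (fun q => f q * g q) q.
Proof.
  apply contat_binop. intros eps He.
  set (A := Rabs (f q)). set (B := Rabs (g q)).
  assert (HA : 0 <= A) by apply Rabs_pos. assert (HB : 0 <= B) by apply Rabs_pos.
  exists (Rmin 1 (eps / (A + B + 1))). split.
  { apply Rmin_pos. lra. apply Rdiv_lt_0_compat; lra. }
  intros a b Ha Hb.
  set (dl := Rmin 1 (eps / (A + B + 1))) in *.
  assert (dl <= 1) by apply Rmin_l.
  assert (dl <= eps / (A + B + 1)) by apply Rmin_r.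
  assert (Hdl : dl * (A + B + 1) <= eps).
  { apply (Rmult_le_compat_r (A + B + 1)) in H0; [|lra].
    unfold Rdiv in H0. rewrite Rmult_assoc, Rinv_l in H0; lra. }
  replace (a * b - f q * g q) with ((a - f q) * (b - g q) + (a - f q) * g q + f q * (b - g q)) by ring.
  assert (Rabs ((a - f q) * (b - g q)) < dl).
  { rewrite Rabs_mult. assert (0 <= Rabs (a - f q)) by apply Rabs_pos.
    assert (0 <= Rabs (b - g q)) by apply Rabs_pos. nra. }
  assert (Rabs ((a - f q) * g q) <= dl * B).
  { rewrite Rabs_mult. fold B. apply Rmult_le_compat_r; lra. }
  assert (Rabs (f q * (b - g q)) <= A * dl).
  { rewrite Rabs_mult. fold A. apply Rmult_le_compat_l; lra. }
  eapply Rle_lt_trans. apply Rabs_triang.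
  assert (Rabs ((a - f q) * (b - g q) + (a - f q) * g q) <= Rabs ((a - f q) * (b - g q)) + Rabs ((a - f q) * g q)) by apply Rabs_triang.
  nra.
Qed.

Lemma contat_comp {n} (phi : R -> R) (f : Dom n -> R) q :
  continuity_pt phi (f q) -> contat f q -> contat (fun q => phi (f q)) q.
Proof.
  intros Hp Hf eps He. destruct (Hp eps He) as [d [Hd Hd']].
  destruct (Hf d Hd) as [d1 [Hd1 H1]]. exists d1. split; auto.
  intros q' A B. destruct (Req_dec (f q') (f q)) as [E|E].
  - rewrite E, Rminus_diag, Rabs_R0. auto.
  - apply (Hd' (f q')). split. split. exact I. congruence. apply H1; auto.
Qed.

Lemma shift0 {n} (q : Dom n) d : shift q d 0 = q.
Proof.
  destruct q as [x y]. destruct d as [i|]; simpl.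
  - f_equal. apply functional_extensionality. intros j. destruct Fin.eq_dec; ring.
  - f_equal. ring.
Qed.

Lemma has_pd_const {n} c d (q : Dom n) : has_pd (fun _ => c) d q 0.
Proof. unfold has_pd. apply derivable_pt_lim_const. Qed.

Lemma dpl_eq f x l l' : derivable_pt_lim f x l -> l = l' -> derivable_pt_lim f x l'.
Proof. intros H <-; exact H. Qed.

Lemma dpl_xh c : derivable_pt_lim (fun h => c + h) 0 1.
Proof.
  apply (dpl_eq _ _ (0 + 1)). apply (derivable_pt_lim_plus (fun _ => c) (fun h => h)).
  apply derivable_pt_lim_const. apply derivable_pt_lim_id. ring.
Qed.

Definition dfst {n} (d : option (Fin.t n)) : R := match d with None => 1 | Some _ => 0 end.
Definition dsnd {n} (d : option (Fin.t n)) (j : Fin.t n) : R :=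
  match d with None => 0 | Some i => if Fin.eq_dec i j then 1 else 0 end.

Lemma has_pd_fst {n} d (q : Dom n) : has_pd fst d q (dfst d).
Proof.
  unfold has_pd. destruct d; simpl.
  - apply derivable_pt_lim_const.
  - apply dpl_xh.
Qed.

Lemma has_pd_snd {n} j d (q : Dom n) : has_pd (fun q => snd q j) d q (dsnd d j).
Proof.
  unfold has_pd. destruct d as [i|]; simpl.
  - destruct (Fin.eq_dec i j). apply dpl_xh. apply derivable_pt_lim_const.
  - apply derivable_pt_lim_const.
Qed.

Lemma has_pd_plus {n} (f g : Dom n -> R) d q a b :
  has_pd f d q a -> has_pd g d q b -> has_pd (fun q => f q + g q) d q (a + b).
Proof.
  unfold has_pd. intros Hf Hg.
  exact (derivable_pt_lim_plus (fun h => f (shift q d h)) (fun h => g (shift q d h)) 0 a b Hf Hg).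
Qed.

Lemma has_pd_mult {n} (f g : Dom n -> R) d q a b :
  has_pd f d q a -> has_pd g d q b -> has_pd (fun q => f q * g q) d q (a * g q + f q * b).
Proof.
  unfold has_pd. intros Hf Hg.
  pose proof (derivable_pt_lim_mult (fun h => f (shift q d h)) (fun h => g (shift q d h)) 0 a b Hf Hg) as H.
  cbv beta in H. rewrite shift0 in H. exact H.
Qed.

Lemma has_pd_comp {n} (phi : R -> R) (f : Dom n -> R) d q a b :
  has_pd f d q a -> derivable_pt_lim phi (f q) b -> has_pd (fun q => phi (f q)) d q (b * a).
Proof.
  unfold has_pd. intros Hf Hp. rewrite <- (shift0 q d) in Hp at 1.
  exact (derivable_pt_lim_comp (fun h => f (shift q d h)) phi 0 a b Hf Hp).
Qed.

Lemma has_pd_eq {n} (f : Dom n -> R) d q a b : has_pd f d q a -> a = b -> has_pd f d q b.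
Proof. intros H <-; exact H. Qed.

Lemma dpl_Rinv y : y <> 0 -> derivable_pt_lim Rinv y (- (/ y * / y)).
Proof.
  intros Hy. apply is_derive_Reals.
  pose proof (is_derive_inv (fun x => x) y 1 (is_derive_id y) Hy) as H.
  replace (- (/ y * / y)) with (- 1 / y ^ 2). exact H. field. auto.
Qed.

Section CkTheory.
Context {n : nat}.

Lemma Ck_cont k U (f : Dom n -> R) : Ck k U f -> cont_on U f.
Proof. destruct k; simpl; tauto. Qed.

Lemma Ck_weak k : forall U (f : Dom n -> R), Ck (S k) U f -> Ck k U f.
Proof.
  induction k as [|k IH]; intros U f H.
  - exact (proj1 H).
  - destruct H as [Hc Hd]. split; auto. intros d. destruct (Hd d) as [A B]. split; auto.
Qed.

Lemma Ck_weak_le k m U (f : Dom n -> R) : (m <= k)%nat -> Ck k U f -> Ck m U f.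
Proof.
  induction 1; auto. intros H'. apply IHle. apply Ck_weak. auto.
Qed.



Lemma Ck_has_pd k r (f : Dom n -> R) d q : Ck (S k) (box r) f -> box r q -> has_pd f d q (pd f d q).
Proof.
  intros [_ H] Hq. destruct (H d) as [E _]. destruct (E q Hq) as [l Hl].
  rewrite (has_pd_pd _ _ _ _ Hl). exact Hl.
Qed.

Lemma Ck_pd k U (f : Dom n -> R) d : Ck (S k) U f -> Ck k U (pd f d).
Proof. intros [_ H]. apply (H d). Qed.

Lemma Ck_ext r k : forall (f g : Dom n -> R), (forall q, box r q -> f q = g q) ->
  Ck k (box r) f -> Ck k (box r) g.
Proof.
  induction k as [|k IH]; intros f g Hfg H.
  - simpl in *. apply cont_on_at. intros q Hq. eapply contat_ext; eauto.
    apply cont_on_at with (U := box r); auto.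
  - destruct H as [Hc Hd]. split.
    + apply cont_on_at. intros q Hq. eapply contat_ext; eauto. apply cont_on_at with (U := box r); auto.
    + intros d. destruct (Hd d) as [E C]. split.
      * intros q Hq. destruct (E q Hq) as [l Hl]. exists l. eapply has_pd_ext; eauto.
      * apply (IH (pd f d)); auto. intros q Hq. eapply pd_ext; eauto.
Qed.

Lemma Ck_intro k r (f : Dom n -> R) (D : option (Fin.t n) -> Dom n -> R) :
  cont_on (box r) f -> (forall d q, box r q -> has_pd f d q (D d q)) ->
  (forall d, Ck k (box r) (D d)) -> Ck (S k) (box r) f.
Proof.
  intros Hc Hd HD. split; auto. intros d. split.
  - intros q Hq. eauto.
  - apply (Ck_ext r k (D d)); auto. intros q Hq. symmetry. apply has_pd_pd. auto.
Qed.

Lemma Ck_mono k : forall (U V : Dom n -> Prop) (f : Dom n -> R), (forall q, V q -> U q) ->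
  Ck k U f -> Ck k V f.
Proof.
  induction k as [|k IH]; intros U V f HUV H.
  - simpl in *. intros q Hq. apply H. auto.
  - destruct H as [Hc Hd]. split.
    + intros q Hq. apply Hc. auto.
    + intros d. destruct (Hd d) as [E C]. split; eauto.
Qed.

Variable r : R.

Lemma Ck_const k : forall c, Ck k (box r) (fun _ : Dom n => c).
Proof.
  induction k as [|k IH]; intros c.
  - apply cont_on_at. intros; apply contat_const.
  - apply (Ck_intro k r _ (fun _ _ => 0)).
    + apply cont_on_at. intros; apply contat_const.
    + intros; apply has_pd_const.
    + intros; apply IH.
Qed.

Lemma Ck_fst k : Ck k (box r) (fun q : Dom n => fst q).
Proof.
  destruct k.
  - apply cont_on_at. intros; apply contat_fst.
  - apply (Ck_intro k r _ (fun d _ => dfst d)).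
    + apply cont_on_at. intros; apply contat_fst.
    + intros; apply has_pd_fst.
    + intros; apply Ck_const.
Qed.

Lemma Ck_snd k j : Ck k (box r) (fun q : Dom n => snd q j).
Proof.
  destruct k.
  - apply cont_on_at. intros; apply contat_snd.
  - apply (Ck_intro k r _ (fun d _ => dsnd d j)).
    + apply cont_on_at. intros; apply contat_snd.
    + intros; apply has_pd_snd.
    + intros; apply Ck_const.
Qed.

Lemma Ck_plus k : forall (f g : Dom n -> R), Ck k (box r) f -> Ck k (box r) g ->
  Ck k (box r) (fun q => f q + g q).
Proof.
  induction k as [|k IH]; intros f g Hf Hg.
  - apply cont_on_at. intros q Hq. apply contat_plus; apply cont_on_at with (U := box r); auto.
  - apply (Ck_intro k r _ (fun d q => pd f d q + pd g d q)).
    + apply cont_on_at. intros q Hq. apply contat_plus; apply cont_on_at with (U := box r); auto;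
      eapply Ck_cont; eauto.
    + intros d q Hq. apply has_pd_plus; eapply Ck_has_pd; eauto.
    + intros d. apply IH; apply Ck_pd; auto.
Qed.

Lemma Ck_mult k : forall (f g : Dom n -> R), Ck k (box r) f -> Ck k (box r) g ->
  Ck k (box r) (fun q => f q * g q).
Proof.
  induction k as [|k IH]; intros f g Hf Hg.
  - apply cont_on_at. intros q Hq. apply contat_mult; apply cont_on_at with (U := box r); auto.
  - apply (Ck_intro k r _ (fun d q => pd f d q * g q + f q * pd g d q)).
    + apply cont_on_at. intros q Hq. apply contat_mult; apply cont_on_at with (U := box r); auto;
      eapply Ck_cont; eauto.
    + intros d q Hq. apply has_pd_mult; eapply Ck_has_pd; eauto.
    + intros d. apply Ck_plus; apply IH.
      * apply Ck_pd; auto.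
      * apply Ck_weak; auto.
      * apply Ck_weak; auto.
      * apply Ck_pd; auto.
Qed.

Lemma Ck_opp k (f : Dom n -> R) : Ck k (box r) f -> Ck k (box r) (fun q => - f q).
Proof.
  intros H. apply (Ck_ext r k (fun q => (-1) * f q)). intros; ring.
  apply Ck_mult; auto. apply Ck_const.
Qed.

Lemma Ck_minus k (f g : Dom n -> R) : Ck k (box r) f -> Ck k (box r) g -> Ck k (box r) (fun q => f q - g q).
Proof. intros. apply Ck_plus; auto. apply Ck_opp; auto. Qed.

Lemma Ck_inv k : forall (f : Dom n -> R), Ck k (box r) f -> (forall q, box r q -> f q <> 0) ->
  Ck k (box r) (fun q => / f q).
Proof.
  induction k as [|k IH]; intros f Hf Hnz.
  - apply cont_on_at. intros q Hq. apply contat_comp.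
    + apply (continuity_pt_inv (fun x => x)). apply continuity_pt_id. auto.
    + apply cont_on_at with (U := box r); auto.
  - apply (Ck_intro k r _ (fun d q => - (/ f q * / f q) * pd f d q)).
    + apply cont_on_at. intros q Hq. apply contat_comp.
      * apply (continuity_pt_inv (fun x => x)). apply continuity_pt_id. auto.
      * apply cont_on_at with (U := box r); auto. eapply Ck_cont; eauto.
    + intros d q Hq. apply has_pd_comp. eapply Ck_has_pd; eauto. apply dpl_Rinv; auto.
    + intros d. apply Ck_mult. apply Ck_opp. apply Ck_mult; apply IH; auto; apply Ck_weak; auto.
      apply Ck_pd; auto.
Qed.

Lemma Ck_sqrt k : forall (f : Dom n -> R), Ck k (box r) f -> (forall q, box r q -> 0 < f q) ->
  Ck k (box r) (fun q => sqrt (f q)).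
Proof.
  induction k as [|k IH]; intros f Hf Hpos.
  - apply cont_on_at. intros q Hq. apply contat_comp.
    + apply sqrt_continuity_pt; auto.
    + apply cont_on_at with (U := box r); auto.
  - apply (Ck_intro k r _ (fun d q => / (2 * sqrt (f q)) * pd f d q)).
    + apply cont_on_at. intros q Hq. apply contat_comp.
      * apply sqrt_continuity_pt; auto.
      * apply cont_on_at with (U := box r); auto. eapply Ck_cont; eauto.
    + intros d q Hq. apply has_pd_comp. eapply Ck_has_pd; eauto. apply derivable_pt_lim_sqrt; auto.
    + intros d. apply Ck_mult; [|apply Ck_pd; auto].
      apply Ck_inv.
      * apply Ck_mult. apply Ck_const. apply IH; auto. apply Ck_weak; auto.
      * intros q Hq. specialize (Hpos q Hq). pose proof (sqrt_lt_R0 _ Hpos). lra.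
Qed.

Lemma Ck_sumFin k : forall m (F : Fin.t m -> Dom n -> R), (forall i, Ck k (box r) (F i)) ->
  Ck k (box r) (fun q => sumFin m (fun i => F i q)).
Proof.
  induction m as [|m IH]; intros F HF; simpl.
  - apply Ck_const.
  - apply Ck_plus; [auto | apply (IH (fun i => F (Fin.FS i))); auto].
Qed.

End CkTheory.

Definition upd {n} (y : Fin.t n -> R) (i : Fin.t n) (h : R) : Fin.t n -> R :=
  fun j => if Fin.eq_dec i j then y j + h else y j.

Definition IntG {n} (g : Dom n -> R) (q : Dom n) : R :=
  RInt (fun t => g (t, snd q)) 0 (fst q).

Lemma upd0 {n} (y : Fin.t n -> R) i : upd y i 0 = y.
Proof. apply functional_extensionality. intros j. unfold upd. destruct Fin.eq_dec; ring. Qed.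

Lemma upd_upd {n} (y : Fin.t n -> R) i a b : upd (upd y i a) i b = upd y i (a + b).
Proof. apply functional_extensionality. intros j. unfold upd. destruct Fin.eq_dec; ring. Qed.

Lemma upd_close {n} (y : Fin.t n -> R) i u j : Rabs (upd y i u j - y j) <= Rabs u.
Proof.
  unfold upd. destruct Fin.eq_dec.
  - replace (y j + u - y j) with u by ring. lra.
  - rewrite Rminus_diag, Rabs_R0. apply Rabs_pos.
Qed.

Lemma seg_box {n} r a b (y : Fin.t n -> R) t : box r (a, y) -> box r (b, y) ->
  Rmin a b <= t <= Rmax a b -> box r (t, y).
Proof.
  intros [Ha Hy] [Hb _] Ht. split; auto. simpl in *.
  apply Rabs_def2 in Ha. apply Rabs_def2 in Hb. apply Rabs_def1.
  - pose proof (Rmax_lub_lt a b r ltac:(lra) ltac:(lra)). lra.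
  - pose proof (Rmin_glb_lt a b (-r) ltac:(lra) ltac:(lra)). lra.
Qed.

Lemma cont_slice {n} r (g : Dom n -> R) t y : cont_on (box r) g -> box r (t, y) ->
  continuous (fun s => g (s, y)) t.
Proof.
  intros Hc Hb. apply continuity_pt_filterlim. intros eps He.
  destruct (Hc _ Hb eps He) as [d [Hd H]]. exists d. split; auto.
  intros s [_ Hs]. apply H. exact Hs. intros i. simpl. rewrite Rminus_diag, Rabs_R0. auto.
Qed.

Lemma exRInt {n} r (g : Dom n -> R) a b y : cont_on (box r) g -> box r (a, y) -> box r (b, y) ->
  ex_RInt (fun t => g (t, y)) a b.
Proof.
  intros Hc Ha Hb. apply (@ex_RInt_continuous R_CompleteNormedModule). intros z Hz. eapply cont_slice; eauto.
  eapply seg_box; [exact Ha | exact Hb | exact Hz].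
Qed.

Lemma dpl_shift F x0 l : derivable_pt_lim (fun h => F (x0 + h)) 0 l -> derivable_pt_lim F x0 l.
Proof.
  intros H eps He. destruct (H eps He) as [d Hd]. exists d. intros h Hh0 Hh.
  specialize (Hd h Hh0 Hh). rewrite !Rplus_0_l, Rplus_0_r in Hd. exact Hd.
Qed.

Lemma dpl_unshift F x0 l : derivable_pt_lim F x0 l -> derivable_pt_lim (fun h => F (x0 + h)) 0 l.
Proof.
  intros H eps He. destruct (H eps He) as [d Hd]. exists d. intros h Hh0 Hh.
  specialize (Hd h Hh0 Hh). rewrite !Rplus_0_l, Rplus_0_r. exact Hd.
Qed.

Lemma pd_slice {n} (g : Dom n -> R) t y i u l :
  has_pd g (Some i) (t, upd y i u) l -> is_derive (fun z => g (t, upd y i z)) u l.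
Proof.
  unfold has_pd. simpl. intros H. apply is_derive_Reals. apply dpl_shift.
  replace (fun h => g (t, upd y i (u + h))) with (fun h => g (t, upd (upd y i u) i h)). exact H.
  apply functional_extensionality. intros h. rewrite upd_upd. reflexivity.
Qed.

Lemma abs_RInt_le (f : R -> R) a b M : ex_RInt f a b ->
  (forall t, Rmin a b <= t <= Rmax a b -> Rabs (f t) <= M) -> Rabs (RInt f a b) <= Rabs (b - a) * M.
Proof.
  intros Hex HM. destruct (Rle_dec a b) as [Hab|Hab].
  - rewrite (Rabs_right (b - a)) by lra. apply abs_RInt_le_const; auto.
    intros t Ht. apply HM. rewrite Rmin_left, Rmax_right; lra.
  - rewrite <- (opp_RInt_swap f b a) by (apply ex_RInt_swap; auto).
    change (Rabs (- RInt f b a) <= Rabs (b - a) * M). rewrite Rabs_Ropp.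
    rewrite (Rabs_left (b - a)) by lra. replace (- (b - a)) with (a - b) by ring.
    apply abs_RInt_le_const. lra. apply ex_RInt_swap; auto.
    intros t Ht. apply HM. rewrite Rmin_right, Rmax_left; lra.
Qed.

Lemma IntG_ftc {n} r (g : Dom n -> R) q : cont_on (box r) g -> box r q ->
  has_pd (IntG g) None q (g q).
Proof.
  intros Hc Hq. destruct q as [x y]. unfold has_pd, IntG. simpl.
  apply is_derive_Reals.
  assert (Hb0 : box r (0, y)). { pose proof Hq as [Hx Hy]. split; auto. simpl. rewrite Rabs_R0.
    pose proof (Rabs_pos x). simpl in *. lra. }
  assert (D : is_derive (fun b => RInt (fun t => g (t, y)) 0 b) x (g (x, y))).
  { apply (is_derive_RInt (fun t => g (t, y)) (fun b => RInt (fun t => g (t, y)) 0 b) 0 x).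
    - apply locR. destruct (box_margin r (x, y) Hq) as [m [Hm Hm']]. exists m. split; auto.
      intros b Hb. apply (@RInt_correct R_CompleteNormedModule). apply (exRInt r); auto. apply Hm'; auto.
      intros i; simpl; rewrite Rminus_diag, Rabs_R0; auto.
    - eapply cont_slice; eauto. }
  pose proof (is_derive_comp (fun b => RInt (fun t => g (t, y)) 0 b) (fun h => x + h) 0 (g (x,y)) 1) as C.
  rewrite Rplus_0_r in C. specialize (C D).
  assert (is_derive (fun h : R => x + h) 0 1).
  { apply is_derive_Reals. apply dpl_xh. }
  specialize (C H). change (scal 1 (g (x, y))) with (1 * g (x, y)) in C. rewrite Rmult_1_l in C.
  exact C.
Qed.

Lemma unif_cont {n} r (g : Dom n -> R) x y : cont_on (box r) g -> box r (x, y) ->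
  forall eps, 0 < eps -> exists delta, 0 < delta /\ forall t y',
    Rmin 0 x <= t <= Rmax 0 x -> (forall i, Rabs (y' i - y i) < delta) ->
    Rabs (g (t, y') - g (t, y)) < eps.
Proof.
  intros Hc Hq eps He.
  assert (Hb0 : box r (0, y)). { pose proof Hq as [Hx Hy]. split; auto. simpl. rewrite Rabs_R0.
    pose proof (Rabs_pos x). simpl in *. lra. }
  assert (H : forall t, exists d : posreal, box r (t, y) -> forall q',
     Rabs (fst q' - t) < d -> (forall i, Rabs (snd q' i - y i) < d) -> Rabs (g q' - g (t, y)) < eps / 2).
  { intros t. destruct (classic (box r (t, y))) as [B|B].
    - destruct (Hc _ B (eps/2) ltac:(lra)) as [d [Hd Hd']]. exists (mkposreal d Hd). intros _. exact Hd'.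
    - exists (mkposreal 1 Rlt_0_1). intros C; contradiction. }
  set (delta := fun t => proj1_sig (constructive_indefinite_description _ (H t))).
  assert (Hdelta : forall t, box r (t, y) -> forall q',
     Rabs (fst q' - t) < delta t -> (forall i, Rabs (snd q' i - y i) < delta t) -> Rabs (g q' - g (t, y)) < eps / 2).
  { intros t. unfold delta. destruct constructive_indefinite_description as [d Hd]. exact Hd. }
  destruct (compactness_value_1d (Rmin 0 x) (Rmax 0 x) delta) as [d Hd].
  exists d. split. apply cond_pos. intros t y' Ht Hy'.
  apply NNPP. intros Hneg. apply (Hd t Ht). intros [t0 [Ht0 [A B]]]. apply Hneg.
  assert (Bt0 : box r (t0, y)). { eapply seg_box; [exact Hb0 | exact Hq | exact Ht0]. }
  assert (E1 : Rabs (g (t, y') - g (t0, y)) < eps / 2).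
  { apply Hdelta; auto. intros i. simpl. specialize (Hy' i). lra. }
  assert (E2 : Rabs (g (t, y) - g (t0, y)) < eps / 2).
  { apply Hdelta; auto. intros i. simpl. rewrite Rminus_diag, Rabs_R0. apply cond_pos. }
  replace (g (t, y') - g (t, y)) with ((g (t, y') - g (t0, y)) - (g (t, y) - g (t0, y))) by ring.
  eapply Rle_lt_trans. apply Rabs_triang. rewrite Rabs_Ropp. lra.
Qed.

Lemma IntG_cont {n} r (g : Dom n -> R) q : cont_on (box r) g -> box r q -> contat (IntG g) q.
Proof.
  intros Hc Hq. destruct q as [x y]. intros eps He.
  destruct (box_margin r (x,y) Hq) as [m0 [Hm0 Hm0']].
  destruct (Hc _ Hq 1 Rlt_0_1) as [d1 [Hd1 Hd1']].
  set (M := Rabs (g (x,y)) + 1).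
  assert (HM : 0 < M) by (pose proof (Rabs_pos (g (x,y))); unfold M; lra).
  assert (Hxp : 0 <= Rabs x) by apply Rabs_pos.
  destruct (unif_cont r g x y Hc Hq (eps / (2 * (Rabs x + 1)))) as [d2 [Hd2 Hd2']].
  { apply Rdiv_lt_0_compat. lra. lra. }
  assert (HeM : 0 < eps / (2 * M)) by (apply Rdiv_lt_0_compat; lra).
  exists (Rmin (Rmin m0 d1) (Rmin d2 (eps / (2 * M)))).
  split. { repeat apply Rmin_pos; auto. }
  intros [x' y'] Hx Hy. simpl in Hx, Hy.
  pose proof (Rmin_l (Rmin m0 d1) (Rmin d2 (eps / (2 * M)))) as L1.
  pose proof (Rmin_r (Rmin m0 d1) (Rmin d2 (eps / (2 * M)))) as L2.
  pose proof (Rmin_l m0 d1). pose proof (Rmin_r m0 d1).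
  pose proof (Rmin_l d2 (eps / (2*M))). pose proof (Rmin_r d2 (eps/(2*M))).
  set (D := Rmin (Rmin m0 d1) (Rmin d2 (eps / (2 * M)))) in *.
  assert (B' : box r (x', y')).
  { apply Hm0'; simpl; [lra| intros i; specialize (Hy i); lra]. }
  assert (Bxy' : box r (x, y')).
  { apply Hm0'; simpl; [rewrite Rminus_diag, Rabs_R0; lra | intros i; specialize (Hy i); lra]. }
  assert (B0' : box r (0, y')).
  { pose proof B' as [_ Hy0]. split; auto. simpl. rewrite Rabs_R0. pose proof Hq as [Hx0 _]. simpl in Hx0. lra. }
  assert (B0 : box r (0, y)).
  { pose proof Hq as [Hx0 Hy0]. split; auto. simpl. rewrite Rabs_R0. simpl in Hx0. lra. }
  unfold IntG; simpl.
  assert (X1 : ex_RInt (fun t => g (t, y')) 0 x) by (apply (exRInt r); auto).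
  assert (X2 : ex_RInt (fun t => g (t, y')) x x') by (apply (exRInt r); auto).
  assert (X3 : ex_RInt (fun t => g (t, y)) 0 x) by (apply (exRInt r); auto).
  rewrite <- (RInt_Chasles (fun t => g (t, y')) 0 x x' X1 X2).
  change (plus ?a ?b) with (a + b).
  assert (E : RInt (fun t => g (t, y')) 0 x - RInt (fun t => g (t, y)) 0 x =
              RInt (fun t => g (t,y') - g (t,y)) 0 x).
  { symmetry. exact (RInt_minus (fun t => g (t, y')) (fun t => g (t, y)) 0 x X1 X3). }
  assert (X4 : ex_RInt (fun t => g (t,y') - g (t,y)) 0 x).
  { exact (ex_RInt_minus (fun t => g (t, y')) (fun t => g (t, y)) 0 x X1 X3). }
  assert (I1 : Rabs (RInt (fun t => g (t, y')) x x') <= Rabs (x' - x) * M).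
  { apply abs_RInt_le; auto. intros t Ht.
    assert (Rabs (t - x) <= Rabs (x' - x)).
    { destruct (Rle_dec x x') as [Hle|Hle].
      - rewrite Rmin_left, Rmax_right in Ht by lra.
        rewrite !Rabs_right by lra. lra.
      - rewrite Rmin_right, Rmax_left in Ht by lra.
        rewrite !Rabs_left1 by lra. lra. }
    assert (Rabs (g (t, y') - g (x, y)) < 1).
    { apply Hd1'; simpl. lra. intros i; specialize (Hy i); lra. }
    assert (Rabs (g (t, y')) <= Rabs (g (t, y') - g (x, y)) + Rabs (g (x, y))).
    { replace (g (t, y')) with ((g (t, y') - g (x, y)) + g (x, y)) at 1 by ring. apply Rabs_triang. }
    unfold M. lra. }
  assert (I2 : Rabs (RInt (fun t => g (t,y') - g (t,y)) 0 x) <= Rabs (x - 0) * (eps / (2 * (Rabs x + 1)))).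
  { apply abs_RInt_le; auto. intros t Ht. left. apply Hd2'; auto. intros i; specialize (Hy i); lra. }
  rewrite Rminus_0_r in I2.
  assert (I3 : Rabs (x' - x) * M < eps / 2).
  { assert (Hlt : Rabs (x' - x) < eps / (2 * M)) by lra.
    apply Rmult_lt_compat_r with (r := M) in Hlt; auto.
    replace (eps / (2 * M) * M) with (eps / 2) in Hlt by (field; lra). exact Hlt. }
  assert (I4 : Rabs x * (eps / (2 * (Rabs x + 1))) < eps / 2).
  { replace (Rabs x * (eps / (2 * (Rabs x + 1)))) with (eps / 2 - eps / (2 * (Rabs x + 1))) by (field; lra).
    assert (0 < eps / (2 * (Rabs x + 1))) by (apply Rdiv_lt_0_compat; lra). lra. }
  replace (RInt (fun t => g (t, y')) 0 x + RInt (fun t => g (t, y')) x x' - RInt (fun t => g (t, y)) 0 x)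
    with ((RInt (fun t => g (t, y')) 0 x - RInt (fun t => g (t, y)) 0 x) + RInt (fun t => g (t, y')) x x') by ring.
  rewrite E. eapply Rle_lt_trans. apply Rabs_triang. lra.
Qed.

Lemma IntG_param {n} r (g : Dom n -> R) i q : Ck 1 (box r) g -> box r q ->
  has_pd (IntG g) (Some i) q (IntG (pd g (Some i)) q).
Proof.
  intros Hg Hq. destruct q as [x y].
  assert (Hcd : cont_on (box r) (pd g (Some i))) by (apply (Ck_cont 0); apply Ck_pd; exact Hg).
  pose proof Hq as [Hx Hy]. simpl in Hx, Hy.
  destruct (fin_bound n y r Hy) as [m [Hm Hmi]].
  assert (Bseg : forall t u, Rabs t <= Rabs x -> Rabs u < r - m -> box r (t, upd y i u)).
  { intros t u Ht Hu. split; simpl. lra. intros j.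
    pose proof (upd_close y i u j). specialize (Hmi j).
    assert (Rabs (upd y i u j) <= Rabs (upd y i u j - y j) + Rabs (y j)).
    { replace (upd y i u j) with ((upd y i u j - y j) + y j) at 1 by ring. apply Rabs_triang. }
    lra. }
  assert (Hseg : forall t, Rmin 0 x <= t <= Rmax 0 x -> Rabs t <= Rabs x).
  { intros t Ht. destruct (Rle_dec 0 x).
    - rewrite Rmin_left, Rmax_right in Ht by lra. rewrite !Rabs_right by lra. lra.
    - rewrite Rmin_right, Rmax_left in Ht by lra. rewrite !Rabs_left1 by lra. lra. }
  assert (DerEq : forall t u, box r (t, upd y i u) ->
     Derive (fun z => g (t, upd y i z)) u = pd g (Some i) (t, upd y i u)).
  { intros t u B. apply is_derive_unique. apply pd_slice. apply (Ck_has_pd 0 r); auto. }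
  unfold has_pd, IntG. simpl.
  change (derivable_pt_lim (fun h => RInt (fun t => g (t, upd y i h)) 0 x) 0
            (RInt (fun t => pd g (Some i) (t, y)) 0 x)).
  apply is_derive_Reals.
  assert (EqI : RInt (fun t => Derive (fun u => g (t, upd y i u)) 0) 0 x =
                RInt (fun t => pd g (Some i) (t, y)) 0 x).
  { apply RInt_ext. intros t Ht. rewrite DerEq. rewrite upd0. reflexivity.
    apply Bseg. apply Hseg. lra. rewrite Rabs_R0. lra. }
  rewrite <- EqI.
  apply (is_derive_RInt_param (fun u t => g (t, upd y i u)) 0 x 0).
  - apply locR. exists (r - m). split. lra. intros u Hu. rewrite Rminus_0_r in Hu.
    intros t Ht. exists (pd g (Some i) (t, upd y i u)). apply pd_slice.
    apply (Ck_has_pd 0 r); auto.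
  - intros t Ht. intros eps.
    assert (Bt : box r (t, y)). { rewrite <- (upd0 y i). apply Bseg; auto. rewrite Rabs_R0; lra. }
    destruct (box_margin r (t, y) Bt) as [m1 [Hm1 Hm1']].
    destruct (Hcd _ Bt eps (cond_pos eps)) as [d [Hd Hd']].
    exists (mkposreal (Rmin m1 d) (Rmin_pos _ _ Hm1 Hd)). simpl. intros u v Hu Hv.
    pose proof (Rmin_l m1 d). pose proof (Rmin_r m1 d).
    rewrite Rminus_0_r in Hu.
    assert (Bp : box r (v, upd y i u)).
    { apply Hm1'; simpl. lra. intros j. pose proof (upd_close y i u j). lra. }
    assert (B0 : box r (t, upd y i 0)). { rewrite upd0. exact Bt. }
    rewrite (DerEq v u Bp), (DerEq t 0 B0), upd0.
    apply Hd'; simpl. lra. intros j. pose proof (upd_close y i u j). lra.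
  - apply locR. exists (r - m). split. lra. intros u Hu. rewrite Rminus_0_r in Hu.
    apply (exRInt r). eapply Ck_cont; eauto.
    apply Bseg; auto. rewrite Rabs_R0; apply Rabs_pos.
    apply Bseg; auto. lra.
Qed.

Lemma Ck_IntG {n} r k : forall (g : Dom n -> R), Ck k (box r) g -> Ck k (box r) (IntG g).
Proof.
  induction k as [|k IH]; intros g Hg.
  - apply cont_on_at. intros q Hq. apply (IntG_cont r); auto.
  - apply (Ck_intro k r _ (fun d => match d with None => g | Some i => IntG (pd g (Some i)) end)).
    + apply cont_on_at. intros q Hq. apply (IntG_cont r); auto. eapply Ck_cont; eauto.
    + intros [i|] q Hq.
      * apply (IntG_param r); auto. apply (Ck_weak_le (S k)); auto. lia.
      * apply (IntG_ftc r); auto. eapply Ck_cont; eauto.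
    + intros [i|].
      * apply IH. apply Ck_pd; auto.
      * apply Ck_weak; auto.
Qed.

Definition delta {n} (j i : Fin.t n) : R := if Fin.eq_dec j i then 1 else 0.

Lemma delta_FS {n} (a b : Fin.t n) : delta (Fin.FS a) (Fin.FS b) = delta a b.
Proof.
  unfold delta. destruct (Fin.eq_dec (Fin.FS a) (Fin.FS b)) as [E|E];
  destruct (Fin.eq_dec a b) as [E'|E']; auto.
  - apply Fin.FS_inj in E. contradiction.
  - subst. contradiction.
Qed.

Lemma delta_F1_FS {n} (a : Fin.t n) : delta Fin.F1 (Fin.FS a) = 0.
Proof. unfold delta. destruct Fin.eq_dec as [E|E]; auto. inversion E. Qed.
Lemma delta_FS_F1 {n} (a : Fin.t n) : delta (Fin.FS a) Fin.F1 = 0.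
Proof. unfold delta. destruct Fin.eq_dec as [E|E]; auto. inversion E. Qed.
Lemma delta_refl {n} (a : Fin.t n) : delta a a = 1.
Proof. unfold delta. destruct Fin.eq_dec as [E|E]; auto. contradiction. Qed.

Lemma sumFin_ext m (f g : Fin.t m -> R) : (forall i, f i = g i) -> sumFin m f = sumFin m g.
Proof.
  revert f g. induction m as [|m IH]; intros f g H; simpl; auto.
  rewrite H. f_equal. apply IH. auto.
Qed.

Lemma sumFin_zero m : sumFin m (fun _ => 0) = 0.
Proof. induction m; simpl; auto. rewrite IHm. ring. Qed.

Lemma sumFin_scal m c (f : Fin.t m -> R) : sumFin m (fun i => c * f i) = c * sumFin m f.
Proof.
  revert f. induction m as [|m IH]; intros f; simpl. ring.
  rewrite IH. ring.
Qed.

Lemma sumFin_nonneg m (f : Fin.t m -> R) : (forall i, 0 <= f i) -> 0 <= sumFin m f.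
Proof.
  revert f. induction m as [|m IH]; intros f H; simpl. lra.
  pose proof (H Fin.F1). pose proof (IH (fun i => f (Fin.FS i)) (fun i => H _)). lra.
Qed.

Lemma sumFin_delta_l m (j : Fin.t m) (f : Fin.t m -> R) : sumFin m (fun i => delta j i * f i) = f j.
Proof.
  revert j f. induction m as [|m IH]; intros j f. inversion j.
  apply (Fin.caseS' j (fun j => sumFin (S m) (fun i => delta j i * f i) = f j)); simpl.
  - rewrite delta_refl. rewrite (sumFin_ext m _ (fun _ => 0)). rewrite sumFin_zero. ring.
    intros i. rewrite delta_F1_FS. ring.
  - intros p. rewrite delta_FS_F1.
    rewrite (sumFin_ext m _ (fun i => delta p i * f (Fin.FS i))). rewrite IH. ring.
    intros i. rewrite delta_FS. ring.
Qed.

Lemma sumFin_delta_r m (j : Fin.t m) (f : Fin.t m -> R) : sumFin m (fun i => f i * delta i j) = f j.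
Proof.
  revert j f. induction m as [|m IH]; intros j f. inversion j.
  apply (Fin.caseS' j (fun j => sumFin (S m) (fun i => f i * delta i j) = f j)); simpl.
  - rewrite delta_refl. rewrite (sumFin_ext m _ (fun _ => 0)). rewrite sumFin_zero. ring.
    intros i. rewrite delta_FS_F1. ring.
  - intros p. rewrite delta_F1_FS.
    rewrite (sumFin_ext m _ (fun i => f (Fin.FS i) * delta i p)). rewrite IH. ring.
    intros i. rewrite delta_FS. ring.
Qed.

Lemma has_pd_opp {n} (f : Dom n -> R) d q a : has_pd f d q a -> has_pd (fun q => - f q) d q (- a).
Proof. unfold has_pd. intros H. exact (derivable_pt_lim_opp (fun h => f (shift q d h)) 0 a H). Qed.

Lemma has_pd_sumFin {n} m (F : Fin.t m -> Dom n -> R) (L : Fin.t m -> R) d q :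
  (forall i, has_pd (F i) d q (L i)) -> has_pd (fun q => sumFin m (fun i => F i q)) d q (sumFin m L).
Proof.
  revert F L. induction m as [|m IH]; intros F L H; simpl.
  - apply has_pd_const.
  - apply has_pd_plus; [auto | apply (IH (fun i => F (Fin.FS i)) (fun i => L (Fin.FS i))); auto].
Qed.

Lemma Rint_0 f a : Rint f a a = 0.
Proof. unfold Rint. destruct excluded_middle_informative; auto. apply RiemannInt_P9. Qed.

Lemma Rint_RInt f a b : ex_RInt f a b -> Rint f a b = RInt f a b.
Proof.
  intros H. unfold Rint. destruct excluded_middle_informative as [E|E].
  - destruct constructive_indefinite_description as [pr Hpr]. simpl. symmetry. apply RInt_Reals.
  - exfalso. apply E. exists (ex_RInt_Reals_0 _ _ _ H). auto.
Qed.

Definition Sm {n} r (f : Dom n -> R) := forall k, Ck k (box r) f.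

Lemma Sm_germ {n} r (f : Dom n -> R) : 0 < r -> Sm r f -> smooth_germ f.
Proof. intros. exists r. auto. Qed.

Lemma germ_Sm {n} (f : Dom n -> R) : smooth_germ f -> exists r, 0 < r /\ Sm r f.
Proof. intros [r [H1 H2]]. exists r. auto. Qed.

Lemma Sm_mono {n} r r' (f : Dom n -> R) : r' <= r -> Sm r f -> Sm r' f.
Proof.
  intros Hr H k. apply (Ck_mono k (box r)); auto. intros q [A B]. split. lra. intros i; specialize (B i); lra.
Qed.

Lemma origin_box {n} r : 0 < r -> box r (@origin n).
Proof. intros H. split; simpl. rewrite Rabs_R0; auto. intros; rewrite Rabs_R0; auto. Qed.

Section Part1.
Context {n : nat} (nf pf : Dom n -> R) (r : R) (Hr : 0 < r) (Snf : Sm r nf) (Spf : Sm r pf)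
  (Hn0 : nf origin = 0) (Hp0 : pf origin = 0) (Hnd : pd nf None origin <> 0).

Let Phi := integration nf pf.

Lemma Sm_c1 : Sm r (c1 Phi).
Proof.
  intros k. apply (Ck_ext r k (IntG (fun q => nf q * pf q))).
  - intros q Hq. unfold c1, Phi, integration, IntG. simpl. symmetry. apply Rint_RInt.
    destruct q as [x y]. apply (exRInt r (fun q => nf q * pf q)).
    apply (Ck_cont 0). apply Ck_mult; auto.
    destruct Hq as [Hx Hy]. split; simpl in *; auto. rewrite Rabs_R0. pose proof (Rabs_pos x). lra.
    auto.
  - apply Ck_IntG. apply Ck_mult; auto.
Qed.

Lemma Sm_c2 : Sm r (c2 Phi).
Proof.
  intros k. apply (Ck_ext r k (IntG pf)).
  - intros q Hq. unfold c2, Phi, integration, IntG. simpl. symmetry. apply Rint_RInt.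
    destruct q as [x y]. apply (exRInt r pf).
    apply (Ck_cont 0). auto.
    destruct Hq as [Hx Hy]. split; simpl in *; auto. rewrite Rabs_R0. pose proof (Rabs_pos x). lra.
    auto.
  - apply Ck_IntG. auto.
Qed.

Lemma pd_c1_None q : box r q -> pd (c1 Phi) None q = nf q * pf q.
Proof.
  intros Hq. apply has_pd_pd. apply (has_pd_ext r (IntG (fun q => nf q * pf q))); auto.
  - intros q' Hq'. unfold c1, Phi, integration, IntG. simpl. symmetry. apply Rint_RInt.
    destruct q' as [x y]. apply (exRInt r (fun q => nf q * pf q)).
    apply (Ck_cont 0). apply Ck_mult; auto.
    destruct Hq' as [Hx Hy]. split; simpl in *; auto. rewrite Rabs_R0. pose proof (Rabs_pos x). lra.
    auto.
  - apply (IntG_ftc r (fun q => nf q * pf q)). apply (Ck_cont 0). apply Ck_mult; auto. auto.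
Qed.

Lemma pd_c2_None q : box r q -> pd (c2 Phi) None q = pf q.
Proof.
  intros Hq. apply has_pd_pd. apply (has_pd_ext r (IntG pf)); auto.
  - intros q' Hq'. unfold c2, Phi, integration, IntG. simpl. symmetry. apply Rint_RInt.
    destruct q' as [x y]. apply (exRInt r pf).
    apply (Ck_cont 0). auto.
    destruct Hq' as [Hx Hy]. split; simpl in *; auto. rewrite Rabs_R0. pose proof (Rabs_pos x). lra.
    auto.
  - apply (IntG_ftc r pf). apply (Ck_cont 0). auto. auto.
Qed.

Lemma pd_cy d i q : pd (cy Phi i) d q = dsnd d i.
Proof. apply has_pd_pd. exact (has_pd_snd i d q). Qed.

Lemma pd_c1_origin i : pd (c1 Phi) (Some i) origin = 0.
Proof.
  apply has_pd_pd. unfold has_pd.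
  apply (derivable_pt_lim_ext (fun _ => 0)).
  - intros h. unfold c1, Phi, integration. simpl. symmetry. apply Rint_0.
  - apply derivable_pt_lim_const.
Qed.

Let A i := pd (c1 Phi) (Some i).
Let B i := pd (c2 Phi) (Some i).
Let w i q := nf q * B i q - A i q.
Let V q := 1 + nf q * nf q + sumFin n (fun i => w i q * w i q).
Let s q := sqrt (V q).
Let nu (q : Dom n) : Tgt n := (/ s q, - nf q * / s q, fun i => w i q * / s q).

Lemma V_ge1 q : 1 <= V q.
Proof.
  unfold V. pose proof (sumFin_nonneg n (fun i => w i q * w i q) (fun i => Rle_0_sqr (w i q))).
  pose proof (Rle_0_sqr (nf q)). unfold Rsqr in *. lra.
Qed.

Lemma s_pos q : 0 < s q.
Proof. unfold s. apply sqrt_lt_R0. pose proof (V_ge1 q). lra. Qed.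

Lemma s_sq q : s q * s q = V q.
Proof. unfold s. apply sqrt_sqrt. pose proof (V_ge1 q). lra. Qed.

Lemma Sm_w i : Sm r (w i).
Proof.
  intros k. unfold w. apply Ck_minus. apply Ck_mult. apply Snf.
  apply Ck_pd. apply Sm_c2. apply Ck_pd. apply Sm_c1.
Qed.

Lemma Sm_invs : Sm r (fun q => / s q).
Proof.
  intros k. apply Ck_inv. unfold s. apply Ck_sqrt. unfold V. apply Ck_plus. apply Ck_plus.
  apply Ck_const. apply Ck_mult; apply Snf.
  apply (Ck_sumFin r k n (fun i q => w i q * w i q)). intros i. apply Ck_mult; apply Sm_w.
  intros q _. pose proof (V_ge1 q). lra.
  intros q _. pose proof (s_pos q). lra.
Qed.

Lemma nu_smooth : smooth_map_germ nu.
Proof.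
  split; [|split].
  - apply (Sm_germ r); auto. intros k. unfold c1, nu. simpl. apply Sm_invs.
  - apply (Sm_germ r); auto. intros k. unfold c2, nu. simpl. apply Ck_mult.
    apply Ck_opp. apply Snf. apply Sm_invs.
  - intros i. apply (Sm_germ r); auto. intros k. unfold cy, nu. simpl. apply Ck_mult.
    apply Sm_w. apply Sm_invs.
Qed.

Lemma nu_unit q : dotT (nu q) (nu q) = 1.
Proof.
  unfold dotT, nu. simpl.
  rewrite (sumFin_ext n _ (fun i => (/ s q * / s q) * (w i q * w i q))) by (intros; ring).
  rewrite sumFin_scal. pose proof (s_sq q). pose proof (s_pos q). unfold V in H.
  replace (/ s q * / s q + - nf q * / s q * (- nf q * / s q) +
     / s q * / s q * sumFin n (fun i => w i q * w i q))
    with ((1 + nf q * nf q + sumFin n (fun i => w i q * w i q)) / (s q * s q)) by (field; lra).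
  rewrite <- H. field. lra.
Qed.

Lemma nu_ortho q d : box r q -> dotT (pdT Phi d q) (nu q) = 0.
Proof.
  intros Hq. unfold dotT, pdT, nu. simpl. pose proof (s_pos q). destruct d as [j|].
  - rewrite (sumFin_ext n _ (fun i => delta j i * (w i q * / s q))).
    2:{ intros i. rewrite pd_cy. reflexivity. }
    rewrite sumFin_delta_l. unfold w. fold (A j q) (B j q). field. lra.
  - rewrite pd_c1_None, pd_c2_None by auto.
    rewrite (sumFin_ext n _ (fun _ => 0)). 2:{ intros i. rewrite pd_cy. simpl. ring. }
    rewrite sumFin_zero. field. lra.
Qed.

Lemma w_origin i : w i origin = 0.
Proof. unfold w, A. rewrite pd_c1_origin, Hn0. ring. Qed.

Lemma V_origin : V origin = 1.
Proof.
  unfold V. rewrite (sumFin_ext n _ (fun _ => 0)). rewrite sumFin_zero, Hn0. ring.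
  intros i. rewrite w_origin. ring.
Qed.

Lemma nu_origin : nu origin = e1.
Proof.
  unfold nu, e1, s. rewrite V_origin, sqrt_1, Hn0. f_equal. f_equal. apply Rinv_1. ring.
  apply functional_extensionality. intros i. rewrite w_origin. ring.
Qed.

Lemma nu_immersive : immersive_pair_at0 Phi nu.
Proof.
  intros c H1 H2 H3 H4 H5 H6.
  assert (Cy : forall i, c (Some i) = 0).
  { intros i. specialize (H3 i). unfold dR0, lin in H3. rewrite pd_cy in H3. simpl in H3.
    rewrite (sumFin_ext n _ (fun j => c (Some j) * delta j i)) in H3.
    2:{ intros j. rewrite pd_cy. reflexivity. }
    rewrite sumFin_delta_r in H3. lra. }
  assert (Hr0 : box r (@origin n)) by (apply origin_box; auto).
  assert (D : has_pd (c2 nu) None origin (- pd nf None origin * / s origin + - nf origin * pd (fun q => / s q) None origin)).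
  { unfold c2, nu. simpl. apply (has_pd_mult (fun q => - nf q) (fun q => / s q)).
    - apply has_pd_opp. apply (Ck_has_pd 0 r). apply Snf. exact Hr0.
    - apply (Ck_has_pd 0 r). apply Sm_invs. exact Hr0. }
  rewrite Hn0 in D. apply has_pd_pd in D.
  unfold dR0, lin in H5. rewrite D in H5.
  rewrite (sumFin_ext n _ (fun _ => 0)) in H5. 2:{ intros j. rewrite Cy. ring. }
  rewrite sumFin_zero in H5.
  assert (c None = 0).
  { pose proof (s_pos origin). assert (/ s origin > 0) by (apply Rinv_0_lt_compat; auto).
    destruct (Req_dec (c None) 0) as [E|E]; auto. exfalso. apply Hnd.
    assert (K1 : c None * (- pd nf None origin * / s origin) = 0) by lra.
    apply Rmult_integral in K1. destruct K1 as [E'|E']. contradiction.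
    assert (K2 : pd nf None origin * / s origin = 0) by lra.
    apply Rmult_integral in K2. destruct K2 as [K2|K2]; auto. lra. }
  intros [i|]; auto.
Qed.

Lemma part1_main : normalized_legendrian Phi.
Proof.
  assert (Hr0 : box r (@origin n)) by (apply origin_box; auto).
  assert (LF : legendrian_field Phi nu).
  { split; [apply nu_smooth | split].
    - exists r. split; auto. intros q Hq. split. apply nu_unit. intros d. apply nu_ortho; auto.
    - apply nu_immersive. }
  split; [|split; [|split]].
  - split; [|split].
    + split; [|split].
      * apply (Sm_germ r); auto. apply Sm_c1.
      * apply (Sm_germ r); auto. apply Sm_c2.
      * intros i. apply (Sm_germ r); auto. intros k. apply Ck_snd.
    + unfold Phi, integration, tgt0. simpl. rewrite !Rint_0. reflexivity.
    + exists nu. exact LF.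
  - exists r. split; auto.
  - rewrite pd_c2_None; auto.
  - exists nu. split; auto. left. apply nu_origin.
Qed.

End Part1.

Lemma box_upd0 {n} r i u v : Rabs u < r -> Rabs v < r -> box r (u, upd (fun _ : Fin.t n => 0) i v).
Proof.
  intros Hu Hv. split; simpl; auto. intros j. pose proof (upd_close (fun _ : Fin.t n => 0) i v j).
  rewrite Rminus_0_r in H. lra.
Qed.

Lemma pd_xslice {n} (g : Dom n -> R) u y l :
  has_pd g None (u, y) l -> is_derive (fun a => g (a, y)) u l.
Proof. unfold has_pd. simpl. intros H. apply is_derive_Reals. apply dpl_shift. exact H. Qed.

Lemma near_lt (u r : R) : Rabs u < r -> locally u (fun z => Rabs z < r).
Proof.
  intros H. apply locR. exists (r - Rabs u). split. lra. intros z Hz.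
  assert (Rabs z <= Rabs (z - u) + Rabs u).
  { replace z with ((z - u) + u) at 1 by ring. apply Rabs_triang. }
  lra.
Qed.

Lemma schwarz_origin {n} r (f : Dom n -> R) i : 0 < r -> Ck 3 (box r) f ->
  pd (pd f (Some i)) None origin = pd (pd f None) (Some i) origin.
Proof.
  intros Hr Hf.
  set (z0 := fun _ : Fin.t n => 0).
  set (F := fun u v => f (u, upd z0 i v)).
  assert (HX : forall g, Ck 1 (box r) g -> forall u v, Rabs u < r -> Rabs v < r ->
     is_derive (fun a => g (a, upd z0 i v)) u (pd g None (u, upd z0 i v)) /\
     is_derive (fun b => g (u, upd z0 i b)) v (pd g (Some i) (u, upd z0 i v))).
  { intros g Hg u v Hu Hv. split.
    - apply pd_xslice. apply (Ck_has_pd 0 r); auto. apply box_upd0; auto.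
    - apply pd_slice. apply (Ck_has_pd 0 r); auto. apply box_upd0; auto. }
  assert (Hf1 : Ck 1 (box r) f) by (apply (Ck_weak_le 3); auto).
  assert (Hfs : forall d, Ck 2 (box r) (pd f d)) by (intros; apply Ck_pd; auto).
  assert (Hfs1 : forall d, Ck 1 (box r) (pd f d)) by (intros; apply Ck_weak; auto).
  assert (D2 : forall u v, Rabs u < r -> Rabs v < r ->
     Derive (fun t => F u t) v = pd f (Some i) (u, upd z0 i v)).
  { intros u v Hu Hv. apply is_derive_unique. apply (HX f Hf1 u v Hu Hv). }
  assert (D1 : forall u v, Rabs u < r -> Rabs v < r ->
     Derive (fun t => F t v) u = pd f None (u, upd z0 i v)).
  { intros u v Hu Hv. apply is_derive_unique. apply (HX f Hf1 u v Hu Hv). }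
  assert (D21 : forall u v, Rabs u < r -> Rabs v < r ->
     is_derive (fun z => Derive (fun t => F z t) v) u (pd (pd f (Some i)) None (u, upd z0 i v))).
  { intros u v Hu Hv. eapply is_derive_ext_loc. 2: apply (HX _ (Hfs1 (Some i)) u v Hu Hv).
    eapply filter_imp. 2: apply (near_lt u r Hu). intros z Hz. simpl. symmetry. apply D2; auto. }
  assert (D12 : forall u v, Rabs u < r -> Rabs v < r ->
     is_derive (fun z => Derive (fun t => F t z) u) v (pd (pd f None) (Some i) (u, upd z0 i v))).
  { intros u v Hu Hv. eapply is_derive_ext_loc. 2: apply (HX _ (Hfs1 None) u v Hu Hv).
    eapply filter_imp. 2: apply (near_lt v r Hv). intros z Hz. simpl. symmetry. apply D1; auto. }
  assert (Hr2 : 0 < r / 2) by lra.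
  assert (Ho : origin = (0, upd z0 i 0)). { unfold origin. rewrite upd0. reflexivity. }
  assert (CC : forall d1 d2, cont_on (box r) (pd (pd f d1) d2)).
  { intros d1 d2. apply (Ck_cont 1). apply Ck_pd. apply Ck_pd. exact Hf. }
  assert (Cont2 : forall d1 d2 G, (forall u v, Rabs u < r -> Rabs v < r -> G u v = pd (pd f d1) d2 (u, upd z0 i v)) ->
     continuity_2d_pt G 0 0).
  { intros d1 d2 G HG eps.
    assert (Bo : box r (@origin n)) by (apply origin_box; auto).
    destruct (CC d1 d2 origin Bo eps (cond_pos eps)) as [d [Hd Hd']].
    exists (mkposreal (Rmin d (r/2)) (Rmin_pos _ _ Hd Hr2)). simpl. intros u v Hu Hv.
    rewrite Rminus_0_r in Hu, Hv. pose proof (Rmin_l d (r/2)). pose proof (Rmin_r d (r/2)).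
    rewrite !HG by (rewrite ?Rabs_R0; lra). rewrite <- Ho.
    apply Hd'; unfold origin; simpl.
    + rewrite Rminus_0_r. lra.
    + intros j. pose proof (upd_close z0 i v j). unfold z0 in *. lra. }
  rewrite Ho.
  rewrite <- (is_derive_unique _ _ _ (D21 0 0 ltac:(rewrite Rabs_R0; lra) ltac:(rewrite Rabs_R0; lra))).
  rewrite <- (is_derive_unique _ _ _ (D12 0 0 ltac:(rewrite Rabs_R0; lra) ltac:(rewrite Rabs_R0; lra))).
  apply (Schwarz F 0 0).
  - exists (mkposreal (r/2) Hr2). simpl. intros u v Hu Hv. rewrite Rminus_0_r in Hu, Hv.
    assert (Hu' : Rabs u < r) by lra. assert (Hv' : Rabs v < r) by lra.
    split; [|split; [|split]].
    + eexists. apply (HX f Hf1 u v Hu' Hv').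
    + eexists. apply (HX f Hf1 u v Hu' Hv').
    + eexists. apply (D21 u v Hu' Hv').
    + eexists. apply (D12 u v Hu' Hv').
  - apply (Cont2 (Some i) None). intros u v Hu Hv. apply is_derive_unique. apply D21; auto.
  - apply (Cont2 None (Some i)). intros u v Hu Hv. apply is_derive_unique. apply D12; auto.
Qed.

Lemma dR0_e0 {n} (f : Dom n -> R) : dR0 f (fun d => match d with None => 1 | Some _ => 0 end) = pd f None origin.
Proof.
  unfold dR0, lin. rewrite (sumFin_ext n _ (fun _ => 0)) by (intros; ring). rewrite sumFin_zero. ring.
Qed.

Section Part2.
Context {n : nat} (Phi nu : Dom n -> Tgt n) (R0 : R) (HR0 : 0 < R0)
  (S1 : Sm R0 (c1 Phi)) (S2 : Sm R0 (c2 Phi)) (N1 : Sm R0 (c1 nu)) (N2 : Sm R0 (c2 nu))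
  (Hi : forall q, box R0 q -> snd (Phi q) = snd q)
  (Hii : pd (c2 Phi) None origin = 0)
  (Hunit : forall q, box R0 q -> dotT (nu q) (nu q) = 1)
  (Hort : forall q d, box R0 q -> dotT (pdT Phi d q) (nu q) = 0)
  (Himm : immersive_pair_at0 Phi nu)
  (Hnu1 : forall q, box R0 q -> c1 nu q <> 0)
  (sg : R) (Hsg : sg = 1 \/ sg = -1)
  (Hnuo : nu origin = (sg, 0, fun _ => 0)).

Let nf := fun q => - c2 nu q * / c1 nu q.
Let pf := pd (c2 Phi) None.

Lemma Bo : box R0 (@origin n).
Proof. apply origin_box; auto. Qed.

Lemma cyPhi q i d : box R0 q -> pd (cy Phi i) d q = dsnd d i.
Proof.
  intros Hq. apply has_pd_pd. apply (has_pd_ext R0 (fun q => snd q i)); auto.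
  intros q' Hq'. unfold cy. rewrite Hi; auto. apply has_pd_snd.
Qed.

Lemma c1o : c1 nu origin = sg.
Proof. unfold c1. rewrite Hnuo. reflexivity. Qed.
Lemma c2o : c2 nu origin = 0.
Proof. unfold c2. rewrite Hnuo. reflexivity. Qed.
Lemma cyo i : cy nu i origin = 0.
Proof. unfold cy. rewrite Hnuo. reflexivity. Qed.

Lemma orthoNone q : box R0 q -> pd (c1 Phi) None q * c1 nu q + pd (c2 Phi) None q * c2 nu q = 0.
Proof.
  intros Hq. pose proof (Hort q None Hq) as H. unfold dotT, pdT in H. simpl in H.
  rewrite (sumFin_ext n _ (fun _ => 0)) in H. rewrite sumFin_zero in H. unfold c1, c2 in *. lra.
  intros i. rewrite cyPhi by auto. simpl. ring.
Qed.

Lemma orthoSome q i : box R0 q ->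
  cy nu i q = - (pd (c1 Phi) (Some i) q * c1 nu q + pd (c2 Phi) (Some i) q * c2 nu q).
Proof.
  intros Hq. pose proof (Hort q (Some i) Hq) as H. unfold dotT, pdT in H. simpl in H.
  rewrite (sumFin_ext n _ (fun j => delta i j * snd (nu q) j)) in H.
  rewrite sumFin_delta_l in H. unfold c1, c2, cy in *. lra.
  intros j. rewrite cyPhi by auto. reflexivity.
Qed.

Lemma P0 : pd (c1 Phi) None origin = 0.
Proof.
  pose proof (orthoNone origin Bo) as H. rewrite c1o, c2o in H.
  destruct Hsg; subst; lra.
Qed.

Lemma Sm_nf : Sm R0 nf.
Proof.
  intros k. unfold nf. apply Ck_mult. apply Ck_opp. apply N2. apply Ck_inv. apply N1. auto.
Qed.

Lemma Sm_pf : Sm R0 pf.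
Proof. intros k. unfold pf. apply Ck_pd. apply S2. Qed.

Lemma nfpf q : box R0 q -> pd (c1 Phi) None q = nf q * pf q.
Proof.
  intros Hq. pose proof (orthoNone q Hq). pose proof (Hnu1 q Hq). unfold nf, pf.
  apply (Rmult_eq_reg_r (c1 nu q)); auto. field_simplify; auto. lra.
Qed.

Lemma hp {f : Dom n -> R} d : Sm R0 f -> has_pd f d origin (pd f d origin).
Proof. intros H. apply (Ck_has_pd 0 R0). apply H. apply Bo. Qed.

Lemma key : pd nf None origin <> 0.
Proof.
  intros Hz.
  set (a := pd (c2 nu) None origin).
  set (d1 := pd (c1 nu) None origin).
  assert (Hsg0 : sg <> 0) by (destruct Hsg; lra).
  assert (Dnf : has_pd nf None origin ((- a) * / c1 nu origin + (- c2 nu origin) * pd (fun q => / c1 nu q) None origin)).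
  { unfold nf. apply (has_pd_mult (fun q => - c2 nu q) (fun q => / c1 nu q)).
    apply has_pd_opp. apply hp. auto. apply hp. intros k. apply Ck_inv. apply N1. auto. }
  apply has_pd_pd in Dnf. rewrite Dnf, c1o, c2o in Hz.
  assert (Ha : a = 0).
  { assert (- a * / sg = 0) by lra. apply Rmult_integral in H. destruct H as [H|H]. lra.
    exfalso. apply Rinv_neq_0_compat in Hsg0. auto. }
  set (A := fun i => pd (c1 Phi) (Some i)).
  set (B := fun i => pd (c2 Phi) (Some i)).
  assert (SA : forall i, Sm R0 (A i)) by (intros i k; apply Ck_pd; apply S1).
  assert (SB : forall i, Sm R0 (B i)) by (intros i k; apply Ck_pd; apply S2).
  set (L := fun i => - ((pd (A i) None origin * c1 nu origin + A i origin * d1) +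
                         (pd (B i) None origin * c2 nu origin + B i origin * a))).
  assert (DL : forall i, has_pd (cy nu i) None origin (L i)).
  { intros i. apply (has_pd_ext R0 (fun q => - (A i q * c1 nu q + B i q * c2 nu q))). apply Bo.
    intros q Hq. symmetry. apply orthoSome; auto.
    apply has_pd_opp. apply has_pd_plus.
    apply (has_pd_mult (A i) (c1 nu)); apply hp; auto.
    apply (has_pd_mult (B i) (c2 nu)); apply hp; auto. }
  assert (Hd1 : d1 = 0).
  { assert (U0 : has_pd (fun q => dotT (nu q) (nu q)) None origin 0).
    { apply (has_pd_ext R0 (fun _ => 1)). apply Bo. intros q Hq. symmetry. auto. apply has_pd_const. }
    assert (U1 : has_pd (fun q => dotT (nu q) (nu q)) None origin
       ((d1 * c1 nu origin + c1 nu origin * d1) + (a * c2 nu origin + c2 nu origin * a)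
        + sumFin n (fun i => L i * cy nu i origin + cy nu i origin * L i))).
    { unfold dotT. apply has_pd_plus. apply has_pd_plus.
      apply (has_pd_mult (c1 nu) (c1 nu)); apply hp; auto.
      apply (has_pd_mult (c2 nu) (c2 nu)); apply hp; auto.
      apply (has_pd_sumFin n (fun i q => cy nu i q * cy nu i q)).
      intros i. apply (has_pd_mult (cy nu i) (cy nu i)); apply DL. }
    apply has_pd_pd in U0. apply has_pd_pd in U1. rewrite U0 in U1.
    rewrite (sumFin_ext n _ (fun _ => 0)) in U1 by (intros i; rewrite cyo; ring).
    rewrite sumFin_zero, c1o, c2o in U1.
    assert (2 * sg * d1 = 0) by lra. apply Rmult_integral in H. destruct H; lra. }
  assert (HAx : forall i, pd (A i) None origin = 0).
  { intros i. unfold A. rewrite (schwarz_origin R0 (c1 Phi) i HR0 (S1 3%nat)).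
    set (P := pd (c1 Phi) None). set (Q := pd (c2 Phi) None).
    assert (V0 : has_pd (fun q => P q * c1 nu q + Q q * c2 nu q) (Some i) origin 0).
    { apply (has_pd_ext R0 (fun _ => 0)). apply Bo. intros q Hq. symmetry. apply orthoNone; auto.
      apply has_pd_const. }
    assert (SP : Sm R0 P) by (intros k; apply Ck_pd; apply S1).
    assert (SQ : Sm R0 Q) by (intros k; apply Ck_pd; apply S2).
    assert (V1 : has_pd (fun q => P q * c1 nu q + Q q * c2 nu q) (Some i) origin
       ((pd P (Some i) origin * c1 nu origin + P origin * pd (c1 nu) (Some i) origin) +
        (pd Q (Some i) origin * c2 nu origin + Q origin * pd (c2 nu) (Some i) origin))).
    { apply has_pd_plus. apply (has_pd_mult P (c1 nu)); apply hp; auto.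
      apply (has_pd_mult Q (c2 nu)); apply hp; auto. }
    apply has_pd_pd in V0. apply has_pd_pd in V1. rewrite V0 in V1.
    unfold P, Q in V1. rewrite P0, Hii, c1o, c2o in V1.
    assert (pd (pd (c1 Phi) None) (Some i) origin * sg = 0) by lra.
    apply Rmult_integral in H. destruct H; auto. lra. }
  assert (HL : forall i, L i = 0).
  { intros i. unfold L. rewrite HAx, Ha, Hd1, c2o. ring. }
  set (e0 := fun d : option (Fin.t n) => match d with None => 1 | Some _ => 0 end).
  assert (E : e0 None = 0).
  { apply Himm; unfold e0; rewrite ?dR0_e0.
    - apply P0.
    - apply Hii.
    - intros i. rewrite dR0_e0. rewrite cyPhi by apply Bo. reflexivity.
    - exact Hd1.
    - exact Ha.
    - intros i. rewrite dR0_e0. rewrite (has_pd_pd _ _ _ _ (DL i)). apply HL. }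
  simpl in E. lra.
Qed.

Lemma part2_main : pedal_unfolding_type (differential Phi).
Proof.
  exists nf, pf. split.
  - split; [|split; [|split; [|split]]].
    + apply (Sm_germ R0); auto. apply Sm_nf.
    + apply (Sm_germ R0); auto. apply Sm_pf.
    + unfold nf. rewrite c2o. ring.
    + apply Hii.
    + apply key.
  - exists R0. split; auto. intros q Hq. unfold differential, pedal_map.
    rewrite nfpf by auto. reflexivity.
Qed.

End Part2.

Lemma box_mono {n} r r' (q : Dom n) : r' <= r -> box r' q -> box r q.
Proof. intros H [A B]. split. lra. intros i; specialize (B i); lra. Qed.

Theorem proposition4 :
  (forall (n : nat) (phi : Dom n -> Tgt n) (nf pf : Dom n -> R),
      pedal_data nf pf -> germ_eq phi (pedal_map nf pf) ->
      normalized_legendrian (integration nf pf)) /\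
  (forall (n : nat) (Phi : Dom n -> Tgt n),
      normalized_legendrian Phi -> pedal_unfolding_type (differential Phi)).
Proof.
  split.
  - intros n phi nf pf [Snf [Spf [Hn0 [Hp0 Hnd]]]] _.
    destruct (germ_Sm nf Snf) as [r1 [Hr1 S1]]. destruct (germ_Sm pf Spf) as [r2 [Hr2 S2]].
    apply (part1_main nf pf (Rmin r1 r2)); auto.
    + apply Rmin_pos; auto.
    + apply (Sm_mono r1); auto. apply Rmin_l.
    + apply (Sm_mono r2); auto. apply Rmin_r.
  - intros n Phi [[[s1 [s2 sy]] _] [[ri [Hri Hi]] [Hii [nu [[[n1 [n2 ny]] [[ru [Hru Hunit]] Himm]] Hnu0]]]]].
    destruct (germ_Sm _ s1) as [r1 [Hr1 S1]]. destruct (germ_Sm _ s2) as [r2 [Hr2 S2]].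
    destruct (germ_Sm _ n1) as [rn1 [Hrn1 N1]]. destruct (germ_Sm _ n2) as [rn2 [Hrn2 N2]].
    set (sg := c1 nu origin).
    assert (Hsg : sg = 1 \/ sg = -1).
    { unfold sg, c1. destruct Hnu0 as [E|E]; rewrite E; [left|right]; reflexivity. }
    assert (Hnuo : nu origin = (sg, 0, fun _ => 0)).
    { unfold sg, c1. destruct Hnu0 as [E|E]; rewrite E; reflexivity. }
    assert (Bo : box rn1 (@origin n)) by (apply origin_box; auto).
    destruct (proj1 (cont_on_at _ _) (Ck_cont 0 _ _ (N1 0%nat)) origin Bo (1/2) ltac:(lra)) as [dl [Hdl Hdl']].
    set (R0 := Rmin (Rmin (Rmin r1 r2) (Rmin rn1 rn2)) (Rmin (Rmin ri ru) dl)).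
    assert (L1 : R0 <= r1). { unfold R0. repeat (apply Rmin_glb_lt || idtac).
      pose proof (Rmin_l (Rmin (Rmin r1 r2) (Rmin rn1 rn2)) (Rmin (Rmin ri ru) dl)).
      pose proof (Rmin_l (Rmin r1 r2) (Rmin rn1 rn2)). pose proof (Rmin_l r1 r2). lra. }
    assert (L2 : R0 <= r2). { unfold R0.
      pose proof (Rmin_l (Rmin (Rmin r1 r2) (Rmin rn1 rn2)) (Rmin (Rmin ri ru) dl)).
      pose proof (Rmin_l (Rmin r1 r2) (Rmin rn1 rn2)). pose proof (Rmin_r r1 r2). lra. }
    assert (L3 : R0 <= rn1). { unfold R0.
      pose proof (Rmin_l (Rmin (Rmin r1 r2) (Rmin rn1 rn2)) (Rmin (Rmin ri ru) dl)).
      pose proof (Rmin_r (Rmin r1 r2) (Rmin rn1 rn2)). pose proof (Rmin_l rn1 rn2). lra. }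
    assert (L4 : R0 <= rn2). { unfold R0.
      pose proof (Rmin_l (Rmin (Rmin r1 r2) (Rmin rn1 rn2)) (Rmin (Rmin ri ru) dl)).
      pose proof (Rmin_r (Rmin r1 r2) (Rmin rn1 rn2)). pose proof (Rmin_r rn1 rn2). lra. }
    assert (L5 : R0 <= ri). { unfold R0.
      pose proof (Rmin_r (Rmin (Rmin r1 r2) (Rmin rn1 rn2)) (Rmin (Rmin ri ru) dl)).
      pose proof (Rmin_l (Rmin ri ru) dl). pose proof (Rmin_l ri ru). lra. }
    assert (L6 : R0 <= ru). { unfold R0.
      pose proof (Rmin_r (Rmin (Rmin r1 r2) (Rmin rn1 rn2)) (Rmin (Rmin ri ru) dl)).
      pose proof (Rmin_l (Rmin ri ru) dl). pose proof (Rmin_r ri ru). lra. }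
    assert (L7 : R0 <= dl). { unfold R0.
      pose proof (Rmin_r (Rmin (Rmin r1 r2) (Rmin rn1 rn2)) (Rmin (Rmin ri ru) dl)).
      pose proof (Rmin_r (Rmin ri ru) dl). lra. }
    assert (HR0 : 0 < R0). { unfold R0. repeat apply Rmin_pos; auto. }
    apply (part2_main Phi nu R0 HR0 (Sm_mono r1 R0 _ L1 S1) (Sm_mono r2 R0 _ L2 S2)
             (Sm_mono rn1 R0 _ L3 N1) (Sm_mono rn2 R0 _ L4 N2)) with (sg := sg); auto.
    + intros q Hq. apply Hi. apply (box_mono _ R0); auto.
    + intros q Hq. apply Hunit. apply (box_mono _ R0); auto.
    + intros q d Hq. apply Hunit. apply (box_mono _ R0); auto.
    + intros q Hq E. destruct Hq as [Hx Hy].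
      assert (Rabs (c1 nu q - c1 nu origin) < 1/2).
      { apply Hdl'; unfold origin; simpl.
        - rewrite Rminus_0_r. lra.
        - intros i. rewrite Rminus_0_r. specialize (Hy i). lra. }
      rewrite E in H. fold sg in H. rewrite Rminus_0_l, Rabs_Ropp in H.
      unfold Rabs in H. destruct Rcase_abs in H; destruct Hsg; lra.
Qed.
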